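(* If $G$ is a countably infinite HE-homogeneous graph satisfying property $(\ast)$, then $G$ is MB-homogeneous.
   Context: All graphs are undirected and loopless; subgraphs are induced. A homomorphism maps adjacent vertices to adjacent vertices; a monomorphism is an injective homomorphism; a bimorphism is a bijective endomorphism. $G$ is HE-homogeneous if every homomorphism between finite induced subgraphs of $G$ is the restriction of a surjective endomorphism of $G$; $G$ is MB-homogeneous if every monomorphism between finite induced subgraphs of $G$ is the restriction of a bimorphism of $G$. $G$ has property $(\ast)$ if for every surjective monomorphism $f:A\to B$ between finite induced subgraphs of $G$ and every vertex $c\notin A$ there exists a vertex $d\notin B$ such that $f\cup\{(c,d)\}$ is a homomorphism. *)

(* Defs.v *)
(* Finite induced subgraphs are given by
   finite vertex predicates; maps between them are total functions V -> V of
   which only the values on the domain matter. *)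
From Stdlib Require Import List Classical ClassicalEpsilon.

Definition simple_graph {V : Type} (E : V -> V -> Prop) : Prop :=
  (forall x y, E x y -> E y x) /\ (forall x, ~ E x x).

Definition countably_infinite (V : Type) : Prop :=
  exists h : V -> nat, (forall x y, h x = h y -> x = y) /\ (forall n, exists x, h x = n).

Definition finite_set {V : Type} (A : V -> Prop) : Prop :=
  exists l : list V, forall x, A x <-> In x l.

Definition is_hom {V : Type} (E : V -> V -> Prop) (A B : V -> Prop) (f : V -> V) : Prop :=
  (forall x, A x -> B (f x)) /\
  (forall x y, A x -> A y -> E x y -> E (f x) (f y)).

Definition is_mono {V : Type} (E : V -> V -> Prop) (A B : V -> Prop) (f : V -> V) : Prop :=
  is_hom E A B f /\ (forall x y, A x -> A y -> f x = f y -> x = y).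

Definition full {V : Type} : V -> Prop := fun _ => True.

Definition surj {V : Type} (g : V -> V) : Prop := forall y, exists x, g x = y.
Definition inj {V : Type} (g : V -> V) : Prop := forall x y, g x = g y -> x = y.

Definition restricts_to {V : Type} (g f : V -> V) (A : V -> Prop) : Prop :=
  forall x, A x -> g x = f x.

Definition HE_homogeneous {V : Type} (E : V -> V -> Prop) : Prop :=
  forall (A B : V -> Prop) (f : V -> V),
    finite_set A -> finite_set B -> is_hom E A B f ->
    exists g : V -> V, is_hom E full full g /\ surj g /\ restricts_to g f A.

Definition MB_homogeneous {V : Type} (E : V -> V -> Prop) : Prop :=
  forall (A B : V -> Prop) (f : V -> V),
    finite_set A -> finite_set B -> is_mono E A B f ->
    exists g : V -> V, is_hom E full full g /\ inj g /\ surj g /\ restricts_to g f A.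

Definition extend_map {V : Type} (f : V -> V) (c d : V) : V -> V :=
  fun x => if excluded_middle_informative (x = c) then d else f x.

Definition add_vertex {V : Type} (A : V -> Prop) (c : V) : V -> Prop :=
  fun x => A x \/ x = c.

Definition property_star {V : Type} (E : V -> V -> Prop) : Prop :=
  forall (A B : V -> Prop) (f : V -> V),
    finite_set A -> finite_set B -> is_mono E A B f ->
    (forall y, B y -> exists x, A x /\ f x = y) ->
    forall c, ~ A c ->
    exists d, ~ B d /\ is_hom E (add_vertex A c) (add_vertex B d) (extend_map f c d).

(* Main.v *)
Require Import Defs.
From Stdlib Require Import List Classical ClassicalEpsilon Lia PeanoNat.

Definition Inv {V} (E : V -> V -> Prop) (l : list V) (f : V -> V) : Prop :=
  (forall x y, In x l -> In y l -> f x = f y -> x = y) /\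
  (forall x y, In x l -> In y l -> E x y -> E (f x) (f y)).

Definition agree {V} (l : list V) (f : V -> V) (l' : list V) (f' : V -> V) :=
  forall x, In x l -> In x l' /\ f' x = f x.

Lemma ext_c {V} (f : V -> V) c d : extend_map f c d c = d.
Proof. unfold extend_map. destruct (excluded_middle_informative (c = c)); congruence. Qed.
Lemma ext_o {V} (f : V -> V) c d x : x <> c -> extend_map f c d x = f x.
Proof. intro H. unfold extend_map. destruct (excluded_middle_informative (x = c)); congruence. Qed.

Lemma forth {V} (E : V -> V -> Prop) l f c :
  property_star E -> Inv E l f ->
  exists l' f', Inv E l' f' /\ agree l f l' f' /\ In c l'.
Proof.
  intros Hs [Hi Hh].
  destruct (classic (In c l)) as [Hc|Hc].
  - exists l, f. split; [split; auto|split; [intros x Hx; auto|auto]].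
  - destruct (Hs (fun x => In x l) (fun y => exists x, In x l /\ f x = y) f) with (c := c)
      as [d [Hd Hhom]].
    + exists l; intuition.
    + exists (map f l). intro y. rewrite in_map_iff. firstorder.
    + split; [split|]. intros x Hx; eauto. intros; apply Hh; auto. intros; apply Hi; auto.
    + intros y [x [Hx Hy]]; eauto.
    + exact Hc.
    + destruct Hhom as [_ Hhom2].
      assert (Hav : forall x, In x (c::l) -> add_vertex (fun x => In x l) c x)
        by (intros x [H|H]; [right; auto | left; auto]).
      exists (c :: l), (extend_map f c d). split; [split|split].
      * intros x y Hx Hy Hxy. destruct Hx as [Hx|Hx]; destruct Hy as [Hy|Hy]; subst.
        -- reflexivity.
        -- rewrite ext_c, ext_o in Hxy by (intro; subst; contradiction).
           exfalso; apply Hd; exists y; split; [exact Hy| symmetry; exact Hxy].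
        -- rewrite ext_c, ext_o in Hxy by (intro; subst; contradiction).
           exfalso; apply Hd; exists x; split; [exact Hx| exact Hxy].
        -- rewrite !ext_o in Hxy by (intro; subst; contradiction). apply Hi; auto.
      * intros x y Hx Hy Exy. apply Hhom2; auto.
      * intros x Hx; split; [right; auto| apply ext_o; intro; subst; contradiction].
      * left; auto.
Qed.

Lemma back {V} (E : V -> V -> Prop) l f y : HE_homogeneous E -> Inv E l f ->
  exists l' f', Inv E l' f' /\ agree l f l' f' /\ exists x, In x l' /\ f' x = y.
Proof.
  intros He [Hi Hh].
  destruct (classic (exists x, In x l /\ f x = y)) as [Hy|Hy].
  - exists l, f. split; [split; auto|split; [intros x Hx; auto|auto]].
  - destruct (He (fun x => In x l) (fun y => exists x, In x l /\ f x = y) f)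
      as [g [[_ Hg] [Hsg Hr]]].
    + exists l; intuition.
    + exists (map f l). intro z. rewrite in_map_iff. firstorder.
    + split; intros; eauto.
    + destruct (Hsg y) as [x Hx].
      assert (Hxl : ~ In x l).
      { intro H; apply Hy; exists x; split; auto. rewrite <- (Hr x H); auto. }
      exists (x :: l), (extend_map f x y). split; [split|split].
      * intros a b Ha Hb Hab. destruct Ha as [Ha|Ha]; destruct Hb as [Hb|Hb]; subst.
        -- reflexivity.
        -- rewrite ext_c, ext_o in Hab by (intro; subst; contradiction).
           exfalso; apply Hy; exists b; split; [exact Hb| symmetry; exact Hab].
        -- rewrite ext_c, ext_o in Hab by (intro; subst; contradiction).
           exfalso; apply Hy; exists a; split; [exact Ha| exact Hab].
        -- rewrite !ext_o in Hab by (intro; subst; contradiction). apply Hi; auto.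
      * intros a b Ha Hb Eab.
        assert (Hga : forall a, In a (x::l) -> extend_map f x y a = g a).
        { intros a0 [H|H]. subst a0. rewrite ext_c; auto.
          rewrite ext_o by (intro; subst; contradiction). symmetry; apply Hr; auto. }
        rewrite (Hga a Ha), (Hga b Hb). apply Hg; [exact I|exact I|auto].
      * intros z Hz; split; [right; auto| apply ext_o; intro; subst; contradiction].
      * exists x; split; [left; auto| apply ext_c].
Qed.

Lemma choice_fun {A B C} (P : A -> B -> C -> Prop) :
  (forall a b, exists c, P a b c) -> exists F, forall a b, P a b (F a b).
Proof.
  intro H. exists (fun a b => proj1_sig (constructive_indefinite_description _ (H a b))).
  intros a b. exact (proj2_sig (constructive_indefinite_description _ (H a b))).
Qed.

Theorem proposition4p6 (V : Type) (E : V -> V -> Prop) :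
  simple_graph E -> countably_infinite V ->
  HE_homogeneous E -> property_star E -> MB_homogeneous E.
Proof.
  intros Hsimp [h [hinj hsurj]] He Hs A B f HA HB Hm.
  destruct HA as [lA HlA].
  assert (Hstep : forall (n:nat) (s : list V * (V -> V)), exists s',
     Inv E (fst s) (snd s) -> Inv E (fst s') (snd s') /\
       agree (fst s) (snd s) (fst s') (snd s') /\
       forall v, h v = n -> In v (fst s') /\ exists x, In x (fst s') /\ snd s' x = v).
  { intros n [l g0]. destruct (hsurj n) as [v Hv].
    destruct (classic (Inv E l g0)) as [HI|HI].
    - destruct (forth E l g0 v Hs HI) as [l1 [f1 [I1 [A1 In1]]]].
      destruct (back E l1 f1 v He I1) as [l2 [f2 [I2 [A2 Im2]]]].
      exists (l2, f2). intros _; simpl. split; auto. split.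
      + intros x Hx; destruct (A1 x Hx) as [a b]; destruct (A2 x a) as [c d]; split; auto; congruence.
      + intros w Hw. assert (w = v) by (apply hinj; congruence). subst w.
        split; [apply A2; auto | auto].
    - exists (l, g0). intro; contradiction. }
  destruct (choice_fun _ Hstep) as [F HF].
  pose (st := nat_rect (fun _ => (list V * (V -> V))%type) (lA, f) (fun m s => F m s)).
  assert (st0 : st 0 = (lA, f)) by reflexivity.
  assert (stS : forall n, st (S n) = F n (st n)) by (intro; reflexivity).
  clearbody st.
  assert (Hinv : forall n, Inv E (fst (st n)) (snd (st n))).
  { induction n.
    - rewrite st0; simpl. destruct Hm as [[_ Hh] Hi]. split.
      + intros x y Hx Hy; apply Hi; apply HlA; auto.
      + intros x y Hx Hy; apply Hh; apply HlA; auto.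
    - rewrite stS. apply (HF n (st n) IHn). }
  assert (Hagr : forall n m, n <= m -> agree (fst (st n)) (snd (st n)) (fst (st m)) (snd (st m))).
  { intros n m Hnm. induction Hnm.
    - intros x Hx; auto.
    - intros x Hx. destruct (IHHnm x Hx) as [a b].
      rewrite stS. destruct (HF m (st m) (Hinv m)) as [_ [Ha _]].
      destruct (Ha x a) as [c d]. split; auto; congruence. }
  assert (Hcov : forall v, In v (fst (st (S (h v)))) /\
     exists x, In x (fst (st (S (h v)))) /\ snd (st (S (h v))) x = v).
  { intro v. rewrite stS. destruct (HF (h v) (st (h v)) (Hinv _)) as [_ [_ Hc]]. auto. }
  assert (Hcoh : forall n m x, In x (fst (st n)) -> In x (fst (st m)) ->
     snd (st n) x = snd (st m) x).
  { intros n m x Hn Hm'. destruct (Hagr n (max n m) ltac:(lia) x Hn) as [_ e1].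
    destruct (Hagr m (max n m) ltac:(lia) x Hm') as [_ e2]. congruence. }
  assert (Hin : forall x n, S (h x) <= n -> In x (fst (st n)) /\ snd (st n) x = snd (st (S (h x))) x).
  { intros x n Hn. apply (Hagr _ _ Hn). apply Hcov. }
  exists (fun x => snd (st (S (h x))) x). split; [|split; [|split]].
  - split; [intros; exact I|]. intros x y _ _ Exy.
    destruct (Hin x (max (S (h x)) (S (h y))) ltac:(lia)) as [a1 b1].
    destruct (Hin y (max (S (h x)) (S (h y))) ltac:(lia)) as [a2 b2].
    rewrite <- b1, <- b2. apply (proj2 (Hinv _)); auto.
  - intros x y Hxy.
    destruct (Hin x (max (S (h x)) (S (h y))) ltac:(lia)) as [a1 b1].
    destruct (Hin y (max (S (h x)) (S (h y))) ltac:(lia)) as [a2 b2].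
    apply (proj1 (Hinv (max (S (h x)) (S (h y))))); auto. congruence.
  - intro y. destruct (proj2 (Hcov y)) as [x [Hx Hxy]]. exists x.
    rewrite (Hcoh (S (h x)) (S (h y)) x); auto. apply Hcov.
  - intros x Hx. assert (Hx0 : In x (fst (st 0))) by (rewrite st0; apply HlA; auto).
    destruct (Hagr 0 (S (h x)) ltac:(lia) x Hx0) as [_ e]. rewrite e, st0. reflexivity.
Qed.
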